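(* Let $N\ge1$, $K\ge2$ be integers with $N$ divisible by $K$, put $m=N/K$, and let $\alpha\in[1,2]$. Let $\sigma$ be a mixed strategy of $\mathcal{B}_\alpha(N,K)$ such that either (a) for every battlefield $k$ the marginal $\sigma_k$ is the uniform distribution on the odd integers $\{1,3,\ldots,2m-1\}$, or (b) for every battlefield $k$ the marginal $\sigma_k$ is the uniform distribution on the even integers $\{0,2,\ldots,2m\}$. Then $\sigma$ is a symmetric equilibrium strategy of $\mathcal{B}_\alpha(N,K)$.
   Context: Fix integers $N\ge1$, $K\ge2$ and a real number $\alpha$. The Colonel Blotto game $\mathcal{B}_\alpha(N,K)$ is the two-player simultaneous-move game with players $A,B$, each with pure strategy set $S=\{s\in\{0,1,\ldots,N\}^K:\sum_{k=1}^K s_k=N\}$, in which the payoff of player $i$ at the pure profile $(s^i,s^{-i})$ is $\pi^i(s^i,s^{-i})=\sum_{k=1}^K\big(\mathbf 1[s^i_k>s^{-i}_k]+\tfrac{\alpha}{2}\mathbf 1[s^i_k=s^{-i}_k]\big)$. Mixed strategies are probability distributions on $S$, with expected payoffs under independent randomization. A symmetric equilibrium strategy is a mixed strategy $\sigma$ such that $(\sigma,\sigma)$ is a Nash equilibrium. For a mixed strategy $\sigma$ and battlefield $k$, the marginal $\sigma_k$ is the distribution of $s_k$ when $s\sim\sigma$. *)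

(* Defs.v *)
From mathcomp Require Import all_boot all_order all_algebra.
From mathcomp Require Import reals.
Set Implicit Arguments. Unset Strict Implicit. Unset Printing Implicit Defensive.
Import Order.TTheory GRing.Theory Num.Theory.
Local Open Scope ring_scope.

Definition alloc (N K : nat) := {ffun 'I_K -> 'I_N.+1}.

Definition feasible (N K : nat) (s : alloc N K) : bool :=
  (\sum_(k < K) (s k : nat))%N == N.

(* Mixed strategy: probability distribution on S (as a weight function on
   alloc N K, nonnegative, summing to 1, vanishing outside S). *)
Definition mixed (R : realType) (N K : nat) (sigma : alloc N K -> R) : Prop :=
  (forall s, 0 <= sigma s) /\
  (forall s, ~~ feasible s -> sigma s = 0) /\
  \sum_(s : alloc N K) sigma s = 1.

Definition payoff (R : realType) (alpha : R) (N K : nat) (s t : alloc N K) : R :=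
  \sum_(k < K) (((t k < s k)%N)%:R + alpha / 2 * ((s k == t k))%:R).

Definition payoffA (R : realType) (alpha : R) (N K : nat)
  (sA sB : alloc N K -> R) : R :=
  \sum_(a : alloc N K) \sum_(b : alloc N K) sA a * sB b * payoff alpha a b.
Definition payoffB (R : realType) (alpha : R) (N K : nat)
  (sA sB : alloc N K -> R) : R :=
  \sum_(a : alloc N K) \sum_(b : alloc N K) sA a * sB b * payoff alpha b a.

Definition symmetric_equilibrium (R : realType) (alpha : R) (N K : nat)
  (sigma : alloc N K -> R) : Prop :=
  mixed sigma /\
  (forall tau, mixed tau -> payoffA alpha tau sigma <= payoffA alpha sigma sigma) /\
  (forall tau, mixed tau -> payoffB alpha sigma tau <= payoffB alpha sigma sigma).

Definition marginal (R : realType) (N K : nat) (sigma : alloc N K -> R)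
  (k : 'I_K) (j : 'I_N.+1) : R :=
  \sum_(s : alloc N K | s k == j) sigma s.

(* Main.v *)
Require Import Defs.
From mathcomp Require Import all_boot all_order all_algebra.
From mathcomp Require Import reals.
From mathcomp Require Import zify ring lra.
Import Order.TTheory GRing.Theory Num.Theory.
Set Implicit Arguments. Unset Strict Implicit.
Local Open Scope ring_scope.

Section S.
Variables (R : realType) (N K : nat) (alpha : R).

Definition hh (x j : 'I_N.+1) : R := ((j < x)%N)%:R + alpha / 2 * (x == j)%:R.
Definition FF (sigma : alloc N K -> R) (k : 'I_K) (x : 'I_N.+1) : R :=
  \sum_(j : 'I_N.+1) marginal sigma k j * hh x j.

Lemma G_decomp (sigma : alloc N K -> R) (a : alloc N K) :
  \sum_b sigma b * payoff alpha a b = \sum_k FF sigma k (a k).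
Proof.
under eq_bigr do rewrite /payoff mulr_sumr.
rewrite exchange_big; apply: eq_bigr => k _.
rewrite (partition_big (fun b : alloc N K => b k) xpredT) //=.
apply: eq_bigr => j _; rewrite /marginal mulr_suml; apply: eq_big => // b.
by move/eqP => <-.
Qed.

Lemma marg_ge (sigma : alloc N K -> R) k (a : alloc N K) :
  mixed sigma -> sigma a <= marginal sigma k (a k).
Proof.
case=> [h0 _]; rewrite /marginal (bigD1 a) //= lerDl.
by apply: sumr_ge0 => i _; apply: h0.
Qed.

Lemma crit (sigma : alloc N K -> R) (c d : R) (P : nat -> bool) :
  mixed sigma ->
  (forall k x, FF sigma k x <= c * (x : nat)%:R + d) ->
  (forall k (x : 'I_N.+1), P x -> FF sigma k x = c * (x : nat)%:R + d) ->
  (forall k j, marginal sigma k j != 0 -> P j) ->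
  symmetric_equilibrium alpha sigma.
Proof.
move=> hm hle heq hsup.
have [h0 [hinf h1]] := hm.
set V := c * N%:R + K%:R * d.
have sumV : forall a : alloc N K, feasible a ->
    \sum_k (c * (a k : nat)%:R + d) = V.
  move=> a /eqP fa; rewrite big_split /= -mulr_sumr -natr_sum fa sumr_const card_ord.
  by rewrite /V mulr_natl.
have C1 : forall a, feasible a -> \sum_b sigma b * payoff alpha a b <= V.
  move=> a fa; rewrite G_decomp -(sumV a fa); apply: ler_sum => k _; exact: hle.
have C2 : forall a, sigma a != 0 -> \sum_b sigma b * payoff alpha a b = V.
  move=> a sa; have fa : feasible a.
    by apply/negPn/negP => /hinf; apply/eqP.
  rewrite G_decomp -(sumV a fa); apply: eq_bigr => k _; apply: heq; apply: (hsup k).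
  have : 0 < sigma a by rewrite lt_def sa h0.
  by move=> /lt_le_trans /(_ (@marg_ge sigma k a hm)); rewrite lt0r => /andP[].
have PA : forall tau, payoffA alpha tau sigma =
    \sum_a tau a * \sum_b sigma b * payoff alpha a b.
  move=> tau; apply: eq_bigr => a _; rewrite mulr_sumr; apply: eq_bigr => b _.
  by rewrite mulrA.
have AA : payoffA alpha sigma sigma = V.
  rewrite PA -[V]mul1r -h1 mulr_suml; apply: eq_bigr => a _.
  have [->|sa] := eqVneq (sigma a) 0; first by rewrite !mul0r.
  by rewrite C2.
have LA : forall tau, mixed tau -> payoffA alpha tau sigma <= V.
  move=> tau [t0 [tinf t1]]; rewrite PA -[V]mul1r -t1 mulr_suml.
  apply: ler_sum => a _.
  have [fa|fa] := boolP (feasible a); last by rewrite tinf // !mul0r.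
  by apply: ler_wpM2l => //; apply: C1.
have BA : forall tau, payoffB alpha sigma tau = payoffA alpha tau sigma.
  move=> tau; rewrite /payoffB /payoffA exchange_big; apply: eq_bigr => a _.
  by apply: eq_bigr => b _; rewrite [sigma b * _]mulrC.
split=> //; split.
  by move=> tau ht; rewrite AA; apply: LA.
by move=> tau ht; rewrite !BA AA; apply: LA.
Qed.

Lemma F_form (sigma : alloc N K -> R) k (w : R) (Q : nat -> bool) x :
  (forall j, marginal sigma k j = if Q j then w else 0) ->
  FF sigma k x = w * ((\sum_(j < N.+1) (Q j && (j < x)))%N%:R + alpha/2 * (Q x)%:R).
Proof.
move=> hq; rewrite /FF; under eq_bigr do rewrite hq /hh mulrDr.
rewrite big_split /= mulrDr natr_sum mulr_sumr; congr (_ + _).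
  by apply: eq_bigr => j _; case: (Q j); case: (j < x)%N; rewrite /= ?mulr0 ?mul0r ?mulr1.
rewrite (bigD1 x) //= big1 ?addr0.
  by rewrite eqxx mulr1; case: (Q x); rewrite /= ?mulr1 ?mulr0 ?mul0r // mulrC.
by move=> j /negbTE; rewrite eq_sym => ->; rewrite mulr0 mulr0.
Qed.

Lemma cnt_odd (m x n : nat) :
  (\sum_(j < n) (odd j && (j < 2 * m) && (j < x)) = (minn (minn n x) (2 * m)) %/ 2)%N.
Proof.
elim: n => [|n IH]; first by rewrite big_ord0 !min0n.
rewrite big_ord_recr /= IH.
have := modn2 n; case: (odd n) => /= h;
case: (ltnP n (2 * m)) => h1; case: (ltnP n x) => h2 /=; lia.
Qed.
Lemma cnt_even (m x n : nat) :
  (\sum_(j < n) (~~ odd j && (j <= 2 * m) && (j < x)) = (minn (minn n x) (2 * m).+1 + 1) %/ 2)%N.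
Proof.
elim: n => [|n IH]; first by rewrite big_ord0 !min0n.
rewrite big_ord_recr /= IH.
have := modn2 n; case: (odd n) => /= h;
case: (leqP n (2 * m)) => h1; case: (ltnP n x) => h2 /=; lia.
Qed.
Lemma real_odd (w a xr qr : R) (b : bool) : 0 <= w -> 1 <= a ->
  (if b then 2*qr + 1 = xr else 2*qr <= xr) ->
  w * (qr + a/2 * b%:R) <= w/2*xr + w*(a-1)/2 /\
  (b -> w * (qr + a/2 * b%:R) = w/2*xr + w*(a-1)/2).
Proof.
move=> w0 a1 hb.
have -> : w/2*xr + w*(a-1)/2 = w * ((xr + a - 1)/2) by ring.
split; last by case: b hb => //= <- _; congr (_ * _); rewrite mulr1; field.
apply: ler_wpM2l => //; case: b hb => /= h; rewrite ?mulr1 ?mulr0; lra.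
Qed.

Lemma real_even (w a xr qr : R) (b : bool) : 0 <= w -> 1 <= a ->
  (if b then 2*qr = xr else 2*qr <= xr + 1) ->
  w * (qr + a/2 * b%:R) <= w/2*xr + w*a/2 /\
  (b -> w * (qr + a/2 * b%:R) = w/2*xr + w*a/2).
Proof.
move=> w0 a1 hb.
have -> : w/2*xr + w*a/2 = w * ((xr + a)/2) by ring.
split; last by case: b hb => //= <- _; congr (_ * _); rewrite mulr1; field.
apply: ler_wpM2l => //; case: b hb => /= h; rewrite ?mulr1 ?mulr0; lra.
Qed.

End S.

Theorem mainTheorem13 (R : realType) (N K : nat) (alpha : R)
  (sigma : alloc N K -> R) :
  (1 <= N)%N -> (2 <= K)%N -> (K %| N)%N ->
  1 <= alpha <= 2 ->
  mixed sigma ->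
  ((forall (k : 'I_K) (j : 'I_N.+1),
      marginal sigma k j =
      (if odd j && (j < 2 * (N %/ K))%N then ((N %/ K)%:R)^-1 else 0))
   \/
   (forall (k : 'I_K) (j : 'I_N.+1),
      marginal sigma k j =
      (if ~~ odd j && (j <= 2 * (N %/ K))%N then ((N %/ K).+1%:R)^-1 else 0))) ->
  symmetric_equilibrium alpha sigma.
Proof.
move=> hN hK hdvd /andP[a1 _] hm.
set m := (N %/ K)%N.
have m1 : (0 < m)%N by rewrite divn_gt0 ?(leq_trans _ hK) // dvdn_leq.
case=> hq.
- pose Q := fun j : nat => odd j && (j < 2 * m)%N.
  pose w := (m%:R : R)^-1.
  have w0 : 0 <= w by rewrite invr_ge0 ler0n.
  have key : forall k (x : 'I_N.+1),
     FF alpha sigma k x <= w/2 * (x : nat)%:R + w*(alpha-1)/2 /\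
     (Q x -> FF alpha sigma k x = w/2 * (x : nat)%:R + w*(alpha-1)/2).
    move=> k x; rewrite (@F_form _ _ _ _ _ k w Q x (hq k)) cnt_odd.
    apply: real_odd => //.
    set q := (_ %/ 2)%N.
    have hx := ltn_ord x.
    rewrite /Q; have := modn2 x; case: (odd x) => h /=; [case: ltnP => hx2 /= |].
    + have e : (2*q + 1 = x)%N by rewrite /q; lia.
      by move: (congr1 (fun n : nat => (n%:R : R)) e) => /=; rewrite natrD natrM.
    + have e : (2*q <= x)%N by rewrite /q; lia.
      by move: e; rewrite -(ler_nat R) natrM.
    + have e : (2*q <= x)%N by rewrite /q; lia.
      by move: e; rewrite -(ler_nat R) natrM.
  apply: (@crit _ _ _ _ _ (w/2) (w*(alpha-1)/2) Q) => //.
  + by move=> k x; case: (key k x).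
  + by move=> k x hx; case: (key k x) => _; apply.
  + by move=> k j; rewrite hq; case: ifP => //; rewrite eqxx.
- pose Q := fun j : nat => ~~ odd j && (j <= 2 * m)%N.
  pose w := ((m.+1)%:R : R)^-1.
  have w0 : 0 <= w by rewrite invr_ge0 ler0n.
  have key : forall k (x : 'I_N.+1),
     FF alpha sigma k x <= w/2 * (x : nat)%:R + w*alpha/2 /\
     (Q x -> FF alpha sigma k x = w/2 * (x : nat)%:R + w*alpha/2).
    move=> k x; rewrite (@F_form _ _ _ _ _ k w Q x (hq k)) cnt_even.
    apply: real_even => //.
    set q := (_ %/ 2)%N.
    have hx := ltn_ord x.
    rewrite /Q; have := modn2 x; case: (odd x) => h /=; [|case: leqP => hx2 /=].
    + have e : (2*q <= x + 1)%N by rewrite /q; lia.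
      by move: e; rewrite -(ler_nat R) natrM natrD.
    + have e : (2*q = x)%N by rewrite /q; lia.
      by move: (congr1 (fun n : nat => (n%:R : R)) e) => /=; rewrite natrM.
    + have e : (2*q <= x + 1)%N by rewrite /q; lia.
      by move: e; rewrite -(ler_nat R) natrM natrD.
  apply: (@crit _ _ _ _ _ (w/2) (w*alpha/2) Q) => //.
  + by move=> k x; case: (key k x).
  + by move=> k x hx; case: (key k x) => _; apply.
  + by move=> k j; rewrite hq; case: ifP => //; rewrite eqxx.
Qed.
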